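(* Let $G$ be a finite abelian group and $M$ a finite $\hat G$-linear inverse monoid. Then $M$ is left inductive and right inductive.
   Context: $\hat G=G\sqcup\{0\}$ with $0$ absorbing. $\mathrm{Vect}_{\hat G}$: objects are finite pointed sets with an action of $\hat G$ ($0v=0$, $g0=0$) such that $G$ acts freely on nonzero elements; morphisms $f$ satisfy $f(0)=0$, $f(gv)=gf(v)$, $f(v_1)=f(v_2)\neq0\Rightarrow Gv_1=Gv_2$. A $\hat G$-linear monoid is a finite monoid $M$ with absorbing element $0_M$ containing $G$ as a subgroup of units commuting with all of $M$, with $G$ acting freely by translation on $M\setminus\{0_M\}$. $M$ is inverse if each $x$ has a unique $x^*$ with $xx^*x=x$, $x^*xx^*=x^*$. For $a\in M$: $J(a)=MaM$, $I(a)=\{x\in J(a):MxM\neq J(a)\}$, $P(a)=(J(a)\setminus I(a))\cup\{0\}$, with left translation $m\cdot x=mx$ if $mx\in J(a)\setminus I(a)$, else $0$, and right translation analogously. $M$ is left (resp. right) inductive if for every idempotent $e$, every left (resp. right) translation on $P(e)$ is a morphism of $\mathrm{Vect}_{\hat G}$ (so $P(e)$ is a $\hat G$-linear representation of $M$, resp. $M^{\mathrm{op}}$). *)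

(* Defs.v *)
From mathcomp Require Import all_boot fingroup.
Set Implicit Arguments. Unset Strict Implicit. Unset Printing Implicit Defensive.

(* A finite monoid is given by a finite carrier T, a multiplication [mul],
   a unit [one] and an absorbing element [zero].  The group G is the whole
   finGroupType gT, embedded in M via [iota]. *)

Section Defs.
Variables (gT : finGroupType) (T : finType).
Variables (mul : T -> T -> T) (one zero : T) (iota : gT -> T).

Local Open Scope group_scope.

Definition Ghat_linear_monoid : Prop :=
  [/\ (forall x y z, mul x (mul y z) = mul (mul x y) z),
      (forall x, mul one x = x /\ mul x one = x),
      (forall x, mul zero x = zero /\ mul x zero = zero),
      (injective iota /\ iota 1 = one /\ forall g h, iota (g * h) = mul (iota g) (iota h))
    & ((forall g m, mul (iota g) m = mul m (iota g)) /\
       (forall g m, m != zero -> mul (iota g) m = m -> g = 1))].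

Definition inverse_monoid : Prop :=
  forall x, exists! y, mul (mul x y) x = x /\ mul (mul y x) y = y.

Definition idempotent_el (e : T) : Prop := mul e e = e.

Definition Jset (a : T) : {set T} := [set mul (mul m a) n | m in T, n in T].
Definition Iset (a : T) : {set T} := [set x in Jset a | Jset x != Jset a].
Definition JIset (a : T) : {set T} := Jset a :\: Iset a.
Definition Pset (a : T) : {set T} := zero |: JIset a.

Definition ltrans (a m x : T) : T :=
  if mul m x \in JIset a then mul m x else zero.
Definition rtrans (a m x : T) : T :=
  if mul x m \in JIset a then mul x m else zero.

(* Objects and morphisms of Vect_{\hat G}, for a subset S of T with
   base point zero and G-action act (the element 0 of \hat G acts by zero). *)
Definition vect_object (S : {set T}) (act : gT -> T -> T) : Prop :=
  [/\ zero \in S,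
      (forall g x, x \in S -> act g x \in S),
      (forall g, act g zero = zero),
      (forall x, x \in S -> act 1 x = x) /\
      (forall g h x, x \in S -> act (g * h) x = act g (act h x))
    & (forall g x, x \in S -> x != zero -> act g x = x -> g = 1)].

Definition Gorbit (act : gT -> T -> T) (v : T) : {set T} :=
  [set act g v | g : gT].

Definition vect_morphism (S : {set T}) (act : gT -> T -> T) (f : T -> T) : Prop :=
  [/\ (forall x, x \in S -> f x \in S),
      f zero = zero,
      (forall g x, x \in S -> f (act g x) = act g (f x))
    & (forall v1 v2, v1 \in S -> v2 \in S -> f v1 = f v2 -> f v1 != zero ->
         Gorbit act v1 = Gorbit act v2)].

Definition left_inductive : Prop :=
  forall e, idempotent_el e ->
    let act := fun g => ltrans e (iota g) in
    vect_object (Pset e) act /\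
    forall m, vect_morphism (Pset e) act (ltrans e m).

Definition right_inductive : Prop :=
  forall e, idempotent_el e ->
    let act := fun g => rtrans e (iota g) in
    vect_object (Pset e) act /\
    forall m, vect_morphism (Pset e) act (rtrans e m).

End Defs.

(* Main.v *)
Require Import Defs.
From mathcomp Require Import all_boot fingroup.
From Stdlib Require Import FunctionalExtensionality.
Set Implicit Arguments. Unset Strict Implicit. Unset Printing Implicit Defensive.

Section Core.
Variables (T : finType) (mul : T -> T -> T) (one zero : T).
Hypothesis mulA : forall x y z, mul x (mul y z) = mul (mul x y) z.
Hypothesis mul1 : forall x, mul one x = x /\ mul x one = x.
Hypothesis Hinv : inverse_monoid mul.

Definition isinv x y := mul (mul x y) x = x /\ mul (mul y x) y = y.

Lemma inv_uniq x y z : isinv x y -> isinv x z -> y = z.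
Proof.
move=> Hy Hz; have [w [_ Hw]] := Hinv x.
by rewrite -(Hw _ Hy) -(Hw _ Hz).
Qed.

Definition inv x := odflt x [pick y | (mul (mul x y) x == x) && (mul (mul y x) y == y)].

Lemma inv_spec x : isinv x (inv x).
Proof.
rewrite /inv; case: pickP => [y /andP[/eqP h1 /eqP h2] //|H].
have [w [[h1 h2] _]] := Hinv x.
by move: (H w); rewrite h1 h2 !eqxx.
Qed.

Lemma inv_eq x y : isinv x y -> inv x = y.
Proof. move=> H; exact: inv_uniq (inv_spec x) H. Qed.

Lemma idemR e z : mul e e = e -> mul e (mul e z) = mul e z.
Proof. by move=> He; rewrite mulA He. Qed.

Lemma idem_mul e f : mul e e = e -> mul f f = f -> mul (mul e f) (mul e f) = mul e f.
Proof.
move=> He Hf.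
have [h1 h2] := inv_spec (mul e f).
move: (inv (mul e f)) h1 h2 => b h1 h2.
have hb : mul (mul f b) e = b.
  apply: (inv_uniq (x := mul e f)); last by split.
  split.
    rewrite -[RHS]h1 -!mulA.
    by rewrite ?(idemR _ He) ?(idemR _ Hf).
  rewrite -[in RHS]h2 -!mulA.
  by rewrite ?(idemR _ He) ?(idemR _ Hf).
have bb : mul b b = b.
  rewrite -[LHS](congr2 mul hb hb) -[RHS]hb -[in RHS]h2 -!mulA.
  by rewrite ?(idemR _ He) ?(idemR _ Hf).
have H1 : isinv b (mul e f) by split.
have H2 : isinv b b by split; rewrite ?bb.
by rewrite (inv_uniq H1 H2) bb.
Qed.

Lemma idem_comm e f : mul e e = e -> mul f f = f -> mul e f = mul f e.
Proof.
move=> He Hf.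
have Ef := idem_mul He Hf; have Fe := idem_mul Hf He.
apply: (inv_uniq (x := mul e f)).
  by split; rewrite Ef.
split.
  rewrite -[RHS]Ef -!mulA.
  by rewrite ?(idemR _ He) ?(idemR _ Hf).
rewrite -[RHS]Fe -!mulA.
by rewrite ?(idemR _ He) ?(idemR _ Hf).
Qed.


Lemma K2 x : mul x (mul (inv x) x) = x.
Proof. by rewrite mulA; case: (inv_spec x). Qed.
Lemma K4 x : mul (inv x) (mul x (inv x)) = inv x.
Proof. by rewrite mulA; case: (inv_spec x). Qed.
Lemma K1 x z : mul x (mul (inv x) (mul x z)) = mul x z.
Proof. by rewrite (mulA (inv x)) (mulA x) K2. Qed.
Lemma K3 x z : mul (inv x) (mul x (mul (inv x) z)) = mul (inv x) z.
Proof. by rewrite (mulA x) (mulA (inv x)) K4. Qed.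

Lemma idl x : mul (mul (inv x) x) (mul (inv x) x) = mul (inv x) x.
Proof. by rewrite -!mulA K3. Qed.
Lemma idr x : mul (mul x (inv x)) (mul x (inv x)) = mul x (inv x).
Proof. by rewrite -!mulA K1. Qed.

Lemma commE x y z : mul x (mul (inv x) (mul (inv y) (mul y z))) =
  mul (inv y) (mul y (mul x (mul (inv x) z))).
Proof.
have E := idem_comm (idr x) (idl y).
transitivity (mul (mul (mul x (inv x)) (mul (inv y) y)) z); first by rewrite -!mulA.
by rewrite E -!mulA.
Qed.

Lemma inv_mul a b : inv (mul a b) = mul (inv b) (inv a).
Proof.
apply: inv_eq; split.
  by rewrite -!mulA commE K1 K2.
by rewrite -!mulA -commE K3 K4.
Qed.

Definition pw c k := iter k (mul c) one.

Lemma pwD c p i : pw c (p + i) = mul (pw c p) (pw c i).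
Proof.
elim: p => [|p IH]; first by rewrite add0n /= (mul1 _).1.
by rewrite addSn /pw /= -/(pw c (p + i)) IH mulA.
Qed.

Lemma stab x a b m : x = mul (mul a (mul m x)) b -> exists z, x = mul z (mul m x).
Proof.
move=> Hx; set c := mul a m.
have Hc : x = mul (mul c x) b by rewrite /c -(mulA a m x).
pose pwb k := iter k (fun y => mul y b) one.
have It : forall k, x = mul (mul (pw c k) x) (pwb k).
  elim=> [|k IH]; first by rewrite /= (mul1 _).1 (mul1 _).2.
  transitivity (mul (mul c (mul (mul (pw c k) x) (pwb k))) b); first by rewrite -IH.
  by rewrite /pw /pwb /= -/(pw c k) -/(pwb k) !mulA.
pose f (k : 'I_#|T|.+1) := pw c k.
have : ~~ injectiveb f.
  apply/negP => /injectiveP inj; move: (leq_card f inj).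
  by rewrite card_ord ltnn.
case/injectivePn => i [j neq fij].
have [i' [j' [lt Eq]]] : exists i' j', i' < j' /\ pw c i' = pw c j'.
  case: (ltngtP i j) => h; [by exists i, j | by exists j, i | ].
  by move: neq; rewrite (ord_inj h) eqxx.
have Ej : j' = (j' - i') + i' by rewrite subnK // ltnW.
have : x = mul (pw c (j' - i')) x.
  have Hjp : pw c j' = mul (pw c (j' - i')) (pw c i') by rewrite {1}Ej pwD.
  by rewrite {1}(It i') Eq Hjp -(mulA _ (pw c i') x) -(mulA (pw c (j' - i'))) -It.
have : 0 < j' - i' by rewrite subn_gt0.
case: (j' - i') => [//|p] _.
rewrite -addn1 pwD /= /pw /= -/(pw c p) (mul1 c).2 /c => Hp.
exists (mul (pw (mul a m) p) a).
by rewrite {1}Hp -!mulA.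
Qed.

Lemma cancelL m x z : x = mul z (mul m x) -> x = mul (inv m) (mul m x).
Proof.
move=> Hz.
have h1 : x = mul x (mul (inv (mul m x)) (mul m x)).
  have := K2 (mul m x); set u := mul m x => Ku.
  transitivity (mul (mul z u) (mul (inv u) u)); last by rewrite -Hz.
  by rewrite -mulA Ku.
by rewrite {1}h1 inv_mul -!mulA commE K2.
Qed.

End Core.

Section Left.
Variables (gT : finGroupType) (T : finType) (mul : T -> T -> T) (one zero : T) (iota : gT -> T).
Hypothesis HG : Ghat_linear_monoid mul one zero iota.
Hypothesis Hinv : inverse_monoid mul.

Local Open Scope group_scope.

Let mulA : forall x y z, mul x (mul y z) = mul (mul x y) z.
Proof. by case: HG. Qed.
Let mul1 : forall x, mul one x = x /\ mul x one = x.
Proof. by case: HG. Qed.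
Let mul0l x : mul zero x = zero. Proof. by case: HG => _ _ h _ _; case: (h x). Qed.
Let mul0r x : mul x zero = zero. Proof. by case: HG => _ _ h _ _; case: (h x). Qed.
Let iota1 : iota 1 = one. Proof. by case: HG => _ _ _ [_ []]. Qed.
Let iotaM g h : iota (g * h) = mul (iota g) (iota h). Proof. by case: HG => _ _ _ [_ []]. Qed.
Let central g m : mul (iota g) m = mul m (iota g). Proof. by case: HG => _ _ _ _ [h _]; apply: h. Qed.
Let free g m : m != zero -> mul (iota g) m = m -> g = 1. Proof. by case: HG => _ _ _ _ [_ h]; apply: h. Qed.

Let iotaV g x : mul (iota g^-1) (mul (iota g) x) = x.
Proof. by rewrite mulA -iotaM mulVg iota1 (mul1 _).1. Qed.

Lemma memJ a x : reflect (exists p q, x = mul (mul p a) q) (x \in Jset mul a).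
Proof.
apply: (iffP idP) => [/imset2P [p q _ _ ->]|[p [q ->]]]; first by exists p, q.
by apply/imset2P; exists p q.
Qed.

Lemma JI_mem a x : (x \in JIset mul a) = (x \in Jset mul a) && (Jset mul x == Jset mul a).
Proof. by rewrite /JIset /Iset !inE; case: (x \in Jset mul a); rewrite /= ?negbK ?andbT. Qed.

Lemma Jset_sub x y : x \in Jset mul y -> Jset mul x \subset Jset mul y.
Proof.
case/memJ=> p [q ->]; apply/subsetP=> z /memJ [r [s ->]].
apply/memJ; exists (mul r p), (mul q s); by rewrite !mulA.
Qed.

Lemma J_self x : x \in Jset mul x.
Proof. by apply/memJ; exists one, one; rewrite (mul1 _).1 (mul1 _).2. Qed.

Lemma JmulL a x e : x \in Jset mul e -> mul a x \in Jset mul e.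
Proof. case/memJ=> p [q ->]; apply/memJ; exists (mul a p), q; by rewrite !mulA. Qed.

Lemma Jset_iota g x : Jset mul (mul (iota g) x) = Jset mul x.
Proof.
apply/eqP; rewrite eqEsubset; apply/andP; split; apply: Jset_sub.
  exact/JmulL/J_self.
by rewrite -{1}(iotaV g x); apply/JmulL/J_self.
Qed.

Lemma JI_iota e g x : (mul (iota g) x \in JIset mul e) = (x \in JIset mul e).
Proof.
rewrite !JI_mem Jset_iota; congr (_ && _); apply/idP/idP; last exact: JmulL.
by rewrite -{2}(iotaV g x); apply: JmulL.
Qed.

Lemma ltrans0 e m : ltrans mul zero e m zero = zero.
Proof. by rewrite /ltrans mul0r; case: ifP. Qed.

Lemma PsetP e x : x \in Pset mul zero e -> x = zero \/ x \in JIset mul e.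
Proof. by rewrite /Pset in_setU1 => /orP[/eqP|]; [left|right]. Qed.

Lemma Pset_ltrans e m x : ltrans mul zero e m x \in Pset mul zero e.
Proof. by rewrite /ltrans; case: ifP => h; rewrite /Pset in_setU1 ?h ?orbT ?eqxx. Qed.

Lemma ltrans_iota e g x : x \in JIset mul e -> ltrans mul zero e (iota g) x = mul (iota g) x.
Proof. by move=> h; rewrite /ltrans JI_iota h. Qed.

Lemma left_ind : left_inductive mul zero iota.
Proof.
move=> e He act; split.
  split.
  - by rewrite /Pset in_setU1 eqxx.
  - by move=> g x _; apply: Pset_ltrans.
  - by move=> g; apply: ltrans0.
  - split.
      move=> x /PsetP [->|h]; first exact: ltrans0.
      by rewrite /act ltrans_iota // iota1 (mul1 _).1.
    move=> g h x /PsetP [->|hx]; first by rewrite /act !ltrans0.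
    by rewrite /act !ltrans_iota ?JI_iota // iotaM mulA.
  - move=> g x /PsetP [->|hx]; first by rewrite eqxx.
    by move=> nz; rewrite /act ltrans_iota // => /(free nz).
move=> m; split.
- by move=> x _; apply: Pset_ltrans.
- exact: ltrans0.
- move=> g x /PsetP [->|hx]; first by rewrite /act !ltrans0.
  rewrite /act ltrans_iota // /ltrans mulA -central -mulA JI_iota.
  by case: ifP => h; rewrite ?mul0r ?JI_iota ?h //; case: ifP.
- move=> v1 v2 /PsetP [->|h1].
    by rewrite ltrans0 eqxx.
  move=> /PsetP [->|h2].
    by rewrite ltrans0 => -> /negP.
  rewrite /ltrans; case: ifP => u1; last by rewrite eqxx.
  case: ifP => u2; last by move=> <-; rewrite eqxx.
  move=> E _; suff -> : v1 = v2 by [].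
  have stab1 : forall v, v \in JIset mul e -> mul m v \in JIset mul e ->
      v = mul (inv mul m) (mul m v).
    move=> v hv hu.
    have : v \in Jset mul (mul m v).
      move: hv hu; rewrite !JI_mem => /andP[_ /eqP E1] /andP[_ /eqP ->].
      by rewrite -E1 J_self.
    case/memJ => p [q hq].
    case: (stab mulA mul1 hq) => z hz.
    exact: (cancelL mulA Hinv hz).
  by rewrite (stab1 _ h1 u1) (stab1 _ h2 u2) E.
Qed.

End Left.

Section Flip.
Variables (gT : finGroupType) (T : finType) (mul : T -> T -> T) (one zero : T) (iota : gT -> T).
Hypothesis HG : Ghat_linear_monoid mul one zero iota.
Hypothesis Hinv : inverse_monoid mul.
Local Open Scope group_scope.

Let mulf := fun x y : T => mul y x.

Let mulA : forall x y z, mul x (mul y z) = mul (mul x y) z.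
Proof. by case: HG. Qed.

Lemma HGf : Ghat_linear_monoid mulf one zero iota.
Proof.
case: HG => A U Z [inj [i1 iM]] [C F]; split.
- by move=> x y z; rewrite /mulf A.
- by move=> x; case: (U x).
- by move=> x; case: (Z x).
- by split => //; split => // g h; rewrite iM /mulf C.
- split; first by move=> g m; rewrite /mulf C.
  by move=> g m nz; rewrite /mulf -C; apply: F.
Qed.

Lemma Hinvf : inverse_monoid mulf.
Proof.
move=> x; have [y [[h1 h2] U]] := Hinv x.
exists y; split; first by rewrite /mulf !mulA.
by move=> y' [h1' h2']; apply: U; move: h1' h2'; rewrite /mulf !mulA.
Qed.

Lemma Jflip a : Jset mulf a = Jset mul a.
Proof.
apply/setP => x; apply/imset2P/imset2P => [[p q _ _ ->]|[p q _ _ ->]].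
  by exists q p => //; rewrite /mulf mulA.
by exists q p => //; rewrite /mulf mulA.
Qed.

Lemma JIflip a : JIset mulf a = JIset mul a.
Proof. by apply/setP => x; rewrite /JIset /Iset !inE !Jflip. Qed.

Lemma Psetflip a : Pset mulf zero a = Pset mul zero a.
Proof. by rewrite /Pset JIflip. Qed.

Lemma ltransflip a : ltrans mulf zero a = rtrans mul zero a.
Proof.
apply: functional_extensionality => m; apply: functional_extensionality => x.
by rewrite /ltrans /rtrans JIflip.
Qed.

Lemma right_ind : right_inductive mul zero iota.
Proof.
move=> e He act.
have := left_ind HGf Hinvf He.
rewrite /= Psetflip ltransflip.
by [].
Qed.

End Flip.

Theorem mainTheorem11 (gT : finGroupType) (T : finType)
  (mul : T -> T -> T) (one zero : T) (iota : gT -> T) :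
  abelian [set: gT] ->
  Ghat_linear_monoid mul one zero iota ->
  inverse_monoid mul ->
  left_inductive mul zero iota /\ right_inductive mul zero iota.
Proof.
move=> _ HG Hinv; split; [exact: left_ind HG Hinv | exact: right_ind HG Hinv].
Qed.
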